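(* Let $G$ be a hyperbolic group and let $H$ be a $G$-limit group. Let $\alpha:F_1\to F_2$ be an isomorphism between finite subgroups $F_1,F_2$ of $H$. Then there exists an isomorphism $\beta:F'_1\to F'_2$ between finite subgroups $F'_1,F'_2$ of $G$ such that the HNN extension $H\ast_\alpha$ is a $(G\ast_\beta)$-limit group.
   Context: For groups $\Gamma$ and $H$, $H$ is fully residually $\Gamma$ if for every finite subset $S\subset H$ there is a homomorphism $H\to\Gamma$ injective on $S$; a $\Gamma$-limit group is a finitely generated fully residually $\Gamma$ group. For an isomorphism $\alpha:F_1\to F_2$ between subgroups of a group $H$, $H\ast_\alpha=\langle H,t\mid txt^{-1}=\alpha(x)\ \forall x\in F_1\rangle$ is the HNN extension. *)

(* Defs.v *)
From Stdlib Require Import List Arith.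
Import ListNotations.

(** Groups (left axioms suffice). *)
Record Group := {
  gcar :> Type;
  gmul : gcar -> gcar -> gcar;
  gone : gcar;
  ginv : gcar -> gcar;
  gmulA : forall x y z, gmul x (gmul y z) = gmul (gmul x y) z;
  gmul1 : forall x, gmul gone x = x;
  gmulV : forall x, gmul (ginv x) x = gone
}.

Arguments gmul {g} _ _.
Arguments gone {g}.
Arguments ginv {g} _.

Definition is_hom (A B : Group) (f : A -> B) : Prop :=
  forall x y : A, f (gmul x y) = gmul (f x) (f y).

Definition is_subgroup (A : Group) (P : A -> Prop) : Prop :=
  P gone /\ (forall x y, P x -> P y -> P (gmul x y)) /\ (forall x, P x -> P (ginv x)).

Definition finite_subgroup (A : Group) (P : A -> Prop) : Prop :=
  is_subgroup A P /\ exists l : list A, forall x, P x -> In x l.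

(** [a] restricts to an isomorphism of groups from the subgroup [F1] onto [F2]
    (only the restriction of the total function [a] to [F1] matters). *)
Definition sub_iso (A : Group) (F1 F2 : A -> Prop) (a : A -> A) : Prop :=
  (forall x, F1 x -> F2 (a x)) /\
  (forall x y, F1 x -> F1 y -> a (gmul x y) = gmul (a x) (a y)) /\
  (forall x y, F1 x -> F1 y -> a x = a y -> x = y) /\
  (forall z, F2 z -> exists x, F1 x /\ a x = z).

Fixpoint eval_word (A : Group) (w : list (bool * A)) : A :=
  match w with
  | [] => gone
  | (b, s) :: w' => gmul (if b then s else ginv s) (eval_word A w')
  end.

Definition word_over (A : Group) (S : list A) (w : list (bool * A)) : Prop :=
  forall p, In p w -> In (snd p) S.

Definition generates (A : Group) (S : list A) : Prop :=
  forall g : A, exists w, word_over A S w /\ eval_word A w = g.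

Definition finitely_generated (A : Group) : Prop :=
  exists S : list A, generates A S.

Definition word_len_le (A : Group) (S : list A) (g : A) (n : nat) : Prop :=
  exists w, word_over A S w /\ length w <= n /\ eval_word A w = g.

Definition word_dist (A : Group) (S : list A) (x y : A) (n : nat) : Prop :=
  word_len_le A S (gmul (ginv x) y) n /\
  forall m, word_len_le A S (gmul (ginv x) y) m -> n <= m.

(** Gromov hyperbolic group: finitely generated, and for some finite generating
    set the word metric is delta-hyperbolic (Gromov four-point condition,
    equivalently (x|y)_w >= min((x|z)_w,(y|z)_w) - delta). *)
Definition hyperbolic_group (A : Group) : Prop :=
  exists (S : list A), generates A S /\
  exists delta : nat,
    forall (x y z w : A) (dxy dzw dxz dyw dxw dyz : nat),
      word_dist A S x y dxy -> word_dist A S z w dzw ->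
      word_dist A S x z dxz -> word_dist A S y w dyw ->
      word_dist A S x w dxw -> word_dist A S y z dyz ->
      dxy + dzw <= Nat.max (dxz + dyw) (dxw + dyz) + 2 * delta.

Definition fully_residually (Gam H : Group) : Prop :=
  forall S : list H, exists f : H -> Gam, is_hom H Gam f /\
    forall x y, In x S -> In y S -> f x = f y -> x = y.

Definition limit_group (Gam H : Group) : Prop :=
  finitely_generated H /\ fully_residually Gam H.

(** (K, i, t) is the HNN extension H *_a = < H, t | t x t^-1 = a(x), x in F1 >,
    characterised by the universal property of this presentation. *)
Definition is_HNN (H : Group) (F1 : H -> Prop) (a : H -> H)
    (K : Group) (i : H -> K) (t : K) : Prop :=
  is_hom H K i /\
  (forall x, F1 x -> gmul t (gmul (i x) (ginv t)) = i (a x)) /\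
  forall (L : Group) (j : H -> L) (s : L),
    is_hom H L j ->
    (forall x, F1 x -> gmul s (gmul (j x) (ginv s)) = j (a x)) ->
    exists phi : K -> L,
      is_hom K L phi /\ (forall x, phi (i x) = j x) /\ phi t = s /\
      forall psi : K -> L,
        is_hom K L psi -> (forall x, psi (i x) = j x) -> psi t = s ->
        forall k, psi k = phi k.

(* Main.v *)
Require Import Defs.
From Stdlib Require Import List Arith Lia Classical ClassicalEpsilon ProofIrrelevance FunctionalExtensionality PropExtensionality.
Import ListNotations.

Section GroupLemmas.
Variable A : Group.
Implicit Types x y z : A.

Lemma mulVr x : gmul x (ginv x) = gone.
Proof.
  rewrite <- (gmul1 A (gmul x (ginv x))).
  rewrite <- (gmulV A (ginv x)) at 1.
  rewrite <- gmulA. rewrite (gmulA A (ginv x) x (ginv x)). rewrite gmulV, gmul1.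
  apply gmulV.
Qed.

Lemma mulr1 x : gmul x gone = x.
Proof. rewrite <- (gmulV A x), gmulA, mulVr, gmul1; reflexivity. Qed.

Lemma mulKl x y : gmul (ginv x) (gmul x y) = y.
Proof. rewrite gmulA, gmulV, gmul1; reflexivity. Qed.

Lemma mulKr x y : gmul x (gmul (ginv x) y) = y.
Proof. rewrite gmulA, mulVr, gmul1; reflexivity. Qed.

Lemma mul_cancel_l x y z : gmul x y = gmul x z -> y = z.
Proof. intro H. rewrite <- (mulKl x y), <- (mulKl x z), H; reflexivity. Qed.

Lemma inv_uniq x y : gmul x y = gone -> ginv x = y.
Proof. intro H. rewrite <- (mulr1 (ginv x)), <- H, mulKl; reflexivity. Qed.

Lemma inv_inv x : ginv (ginv x) = x.
Proof. apply inv_uniq, gmulV. Qed.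

Lemma inv_one : ginv (@gone A) = gone.
Proof. apply inv_uniq, gmul1. Qed.

Lemma inv_mul x y : ginv (gmul x y) = gmul (ginv y) (ginv x).
Proof. apply inv_uniq. rewrite <- gmulA, mulKr, mulVr; reflexivity. Qed.

Lemma mulA' x y z : gmul (gmul x y) z = gmul x (gmul y z).
Proof. symmetry; apply gmulA. Qed.

Lemma mul_eq_inv x y : gmul x y = gone -> x = ginv y.
Proof. intro H. rewrite <- (mulr1 x), <- (mulVr y), gmulA, H, gmul1; reflexivity. Qed.

Lemma eq_one_of x y : gmul (ginv x) y = gone -> x = y.
Proof. intro H. apply mul_eq_inv in H. rewrite <- (inv_inv x), H, inv_inv; reflexivity. Qed.

Lemma mul_cancel_r x y z : gmul y x = gmul z x -> y = z.
Proof. intro H. rewrite <- (mulr1 y), <- (mulr1 z), <- (mulVr x), !gmulA, H; reflexivity. Qed.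

End GroupLemmas.

Section HomLemmas.
Variables A B : Group.
Variable f : A -> B.
Hypothesis hf : is_hom A B f.

Lemma hom_one : f gone = gone.
Proof.
  apply (mul_cancel_l B (f gone)). rewrite <- hf, gmul1, mulr1; reflexivity.
Qed.

Lemma hom_inv x : f (ginv x) = ginv (f x).
Proof. symmetry; apply inv_uniq. rewrite <- hf, mulVr. apply hom_one. Qed.
End HomLemmas.

Ltac gnorm := repeat progress (rewrite ?mulA', ?gmul1, ?mulr1, ?gmulV, ?mulVr, ?mulKl, ?mulKr, ?inv_mul, ?inv_inv, ?inv_one).

Ltac hnorm h := repeat progress (rewrite ?h, ?(hom_one _ _ _ h), ?(hom_inv _ _ _ h)).

Definition tpow (K : Group) (t : K) (e : bool) : K := if e then t else ginv t.

Fixpoint val (A K : Group) (i : A -> K) (t : K) (g : A) (l : list (bool * A)) : K :=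
  match l with
  | [] => i g
  | (e, g1) :: r => gmul (i g) (gmul (tpow K t e) (val A K i t g1 r))
  end.

Definition Pe (A : Group) (P1 P2 : A -> Prop) (e : bool) : A -> Prop := if e then P1 else P2.

Fixpoint reducedL (A : Group) (P1 P2 : A -> Prop) (l : list (bool * A)) : Prop :=
  match l with
  | [] => True
  | (e, g) :: r =>
      match r with
      | [] => True
      | (e', _) :: _ => (e' = negb e -> ~ Pe A P1 P2 e g)
      end /\ reducedL A P1 P2 r
  end.

Record Perm (X : Type) := mkPerm {
  pf : X -> X; pg : X -> X;
  pfg : forall x, pf (pg x) = x; pgf : forall x, pg (pf x) = x }.
Arguments pf {X} _ _.
Arguments pg {X} _ _.

Lemma perm_ext (X : Type) (p q : Perm X) : (forall x, pf p x = pf q x) -> p = q.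
Proof.
  destruct p as [f1 g1 fg1 gf1], q as [f2 g2 fg2 gf2]; simpl; intro H.
  assert (f1 = f2) by (apply functional_extensionality; auto). subst f2.
  assert (g1 = g2).
  { apply functional_extensionality; intro x.
    rewrite <- (gf1 (g2 x)), fg2. reflexivity. }
  subst g2. f_equal; apply proof_irrelevance.
Qed.

Section PermGroup.
Variable X : Type.
Definition pmul (p q : Perm X) : Perm X.
  refine (mkPerm X (fun x => pf p (pf q x)) (fun x => pg q (pg p x)) _ _).
  - intro x; rewrite pfg, pfg; reflexivity.
  - intro x; rewrite pgf, pgf; reflexivity.
Defined.
Definition pone : Perm X := mkPerm X (fun x => x) (fun x => x) (fun x => eq_refl) (fun x => eq_refl).
Definition pinv (p : Perm X) : Perm X := mkPerm X (pg p) (pf p) (pgf X p) (pfg X p).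
Definition PermG : Group.
  refine {| gcar := Perm X; gmul := pmul; gone := pone; ginv := pinv |}.
  - intros; apply perm_ext; reflexivity.
  - intros; apply perm_ext; reflexivity.
  - intros; apply perm_ext; intro; simpl; apply pgf.
Defined.
End PermGroup.

Lemma sig_ext (T : Type) (P : T -> Prop) (a b : {x : T | P x}) : proj1_sig a = proj1_sig b -> a = b.
Proof.
  destruct a as [a pa], b as [b pb]; simpl; intro; subst; f_equal; apply proof_irrelevance.
Qed.

Section Britton.
Variable A : Group.
Variables P1 P2 : A -> Prop.
Variable beta : A -> A.
Hypothesis sg1 : is_subgroup A P1.
Hypothesis sg2 : is_subgroup A P2.
Hypothesis hb : sub_iso A P1 P2 beta.

Lemma sub_inv (P : A -> Prop) : is_subgroup A P -> forall x, P x -> P (ginv x).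
Proof. intros [_ [_ h]]; auto. Qed.
Lemma sub_mul (P : A -> Prop) : is_subgroup A P -> forall x y, P x -> P y -> P (gmul x y).
Proof. intros [_ [h _]]; auto. Qed.
Lemma sub_one (P : A -> Prop) : is_subgroup A P -> P gone.
Proof. intros [h _]; auto. Qed.

Definition rep (P : A -> Prop) (g : A) : A :=
  epsilon (inhabits gone) (fun h => P (gmul g (ginv h)) /\ (P g -> h = gone)).

Lemma rep_spec P g : is_subgroup A P -> P (gmul g (ginv (rep P g))) /\ (P g -> rep P g = gone).
Proof.
  intro sg. unfold rep. apply epsilon_spec.
  destruct (classic (P g)) as [H|H].
  - exists gone. rewrite inv_one, mulr1. auto.
  - exists g. rewrite mulVr. split; [apply sub_one; auto | tauto].
Qed.

Lemma rep_coset P g g' : is_subgroup A P -> P (gmul g' (ginv g)) -> rep P g' = rep P g.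
Proof.
  intros sg H. unfold rep. f_equal. apply functional_extensionality; intro h.
  apply propositional_extensionality.
  assert (E1 : P (gmul g' (ginv h)) <-> P (gmul g (ginv h))).
  { split; intro Q.
    - replace (gmul g (ginv h)) with (gmul (ginv (gmul g' (ginv g))) (gmul g' (ginv h))).
      + apply sub_mul; auto. apply sub_inv; auto.
      + gnorm. reflexivity.
    - replace (gmul g' (ginv h)) with (gmul (gmul g' (ginv g)) (gmul g (ginv h))).
      + apply sub_mul; auto.
      + gnorm. reflexivity. }
  assert (E2 : P g' <-> P g).
  { split; intro Q.
    - replace g with (gmul (ginv (gmul g' (ginv g))) g').
      + apply sub_mul; auto. apply sub_inv; auto.
      + gnorm. reflexivity.
    - replace g' with (gmul (gmul g' (ginv g)) g).
      + apply sub_mul; auto.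
      + gnorm. reflexivity. }
  tauto.
Qed.

Lemma rep_idem P g : is_subgroup A P -> rep P (rep P g) = rep P g.
Proof.
  intro sg. apply rep_coset; auto.
  destruct (rep_spec P g sg) as [H _].
  apply sub_inv in H; auto. rewrite inv_mul, inv_inv in H. exact H.
Qed.

Lemma rep_one_P P g : is_subgroup A P -> rep P g = gone -> P g.
Proof.
  intros sg H. destruct (rep_spec P g sg) as [H1 _]. rewrite H, inv_one, mulr1 in H1; auto.
Qed.

Lemma rep_left P y c : is_subgroup A P -> P y -> rep P (gmul y c) = rep P c.
Proof. intros sg Hy. apply rep_coset; auto. gnorm. exact Hy. Qed.

Lemma rep_inP P g : is_subgroup A P -> P g -> rep P g = gone.
Proof. intros sg H. apply (rep_spec P g sg); auto. Qed.

Definition binv (y : A) : A := epsilon (inhabits gone) (fun x => P1 x /\ beta x = y).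

Lemma binv_spec y : P2 y -> P1 (binv y) /\ beta (binv y) = y.
Proof.
  intro H. unfold binv. apply epsilon_spec. destruct hb as [_ [_ [_ h]]]. auto.
Qed.

Lemma binv_beta x : P1 x -> binv (beta x) = x.
Proof.
  intro H. destruct hb as [h1 [_ [hinj _]]].
  destruct (binv_spec (beta x) (h1 x H)) as [Q1 Q2]. apply hinj; auto.
Qed.

Definition gam (e : bool) : A -> A := if e then beta else binv.
Notation PP := (Pe A P1 P2).

Lemma sgP e : is_subgroup A (PP e).
Proof. destruct e; simpl; auto. Qed.

Lemma gam_in e x : PP e x -> PP (negb e) (gam e x).
Proof.
  destruct e; simpl; intro H.
  - destruct hb as [h _]; auto.
  - apply binv_spec; auto.
Qed.

Lemma gam_gam e x : PP e x -> gam (negb e) (gam e x) = x.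
Proof.
  destruct e; simpl; intro H.
  - apply binv_beta; auto.
  - apply binv_spec; auto.
Qed.

Definition T := (A * list (bool * A))%type.

Definition act_te (e : bool) (w : T) : T :=
  let r := rep (PP e) (fst w) in
  let x := gmul (fst w) (ginv r) in
  match snd w with
  | (e', c) :: l' =>
      if excluded_middle_informative (r = gone /\ e' = negb e)
      then (gmul (gam e x) c, l')
      else (gam e x, (e, r) :: snd w)
  | [] => (gam e x, [(e, r)])
  end.

Definition act_h (h : A) (w : T) : T := (gmul h (fst w), snd w).

Fixpoint validL (l : list (bool * A)) : Prop :=
  match l with
  | [] => True
  | (e, c) :: r =>
      rep (PP e) c = c /\
      match r with [] => True | (e', _) :: _ => (e' = negb e -> c <> gone) end /\
      validL r
  end.

Lemma act_valid e w : validL (snd w) -> validL (snd (act_te e w)).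
Proof.
  destruct w as [g0 l]. unfold act_te; simpl.
  destruct l as [|[e' c] l']; simpl.
  - intros _. split; [apply rep_idem, sgP|]. auto.
  - intros [V1 [V2 V3]].
    destruct (excluded_middle_informative _) as [D|D]; simpl.
    + exact V3.
    + split; [apply rep_idem, sgP|]. split.
      * intros E Hr. apply D. auto.
      * auto.
Qed.

Lemma xin e g : PP e (gmul g (ginv (rep (PP e) g))).
Proof. apply rep_spec, sgP. Qed.

Lemma act_inv e w : validL (snd w) -> act_te (negb e) (act_te e w) = w.
Proof.
  destruct w as [g0 l]. intro V. simpl in V.
  pose proof (xin e g0) as Hx.
  set (r := rep (PP e) g0) in *.
  set (x := gmul g0 (ginv r)) in *.
  assert (Hg : PP (negb e) (gam e x)) by (apply gam_in; auto).
  assert (Hgg : gam (negb e) (gam e x) = x) by (apply gam_gam; auto).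
  assert (Rg : rep (PP (negb e)) (gam e x) = gone) by (apply rep_inP; auto; apply sgP).
  assert (Hxr : gmul x r = g0) by (unfold x; gnorm; reflexivity).
  unfold act_te at 2; simpl. fold r. fold x.
  destruct l as [|[e' c] l'].
  - unfold act_te; simpl. rewrite Rg, inv_one, mulr1.
    destruct (excluded_middle_informative _) as [D|D].
    + rewrite Hgg, Hxr. reflexivity.
    + exfalso. apply D. rewrite Bool.negb_involutive. auto.
  - destruct (excluded_middle_informative _) as [D|D].
    + destruct D as [D1 D2]. subst e'.
      destruct V as [V1 [V2 V3]].
      unfold act_te; simpl.
      rewrite rep_left; [| apply sgP | exact Hg]. rewrite V1.
      replace (gmul (gmul (gam e x) c) (ginv c)) with (gam e x) by (gnorm; reflexivity).
      rewrite Hgg. assert (x = g0) by (rewrite <- Hxr, D1, mulr1; reflexivity).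
      rewrite H. destruct l' as [|[e'' d] l''].
      * reflexivity.
      * destruct (excluded_middle_informative _) as [D'|D'].
        -- exfalso. destruct D' as [D'1 D'2]. apply (V2 D'2 D'1).
        -- reflexivity.
    + unfold act_te; simpl. rewrite Rg, inv_one, mulr1.
      destruct (excluded_middle_informative _) as [D'|D'].
      * rewrite Hgg, Hxr. reflexivity.
      * exfalso. apply D'. rewrite Bool.negb_involutive. auto.
Qed.

Lemma beta_mul x y : P1 x -> P1 y -> beta (gmul x y) = gmul (beta x) (beta y).
Proof. destruct hb as [_ [h _]]; auto. Qed.

Lemma act_rel x w : P1 x -> validL (snd w) ->
  act_te true (act_h x (act_te false w)) = act_h (beta x) w.
Proof.
  intros Px V. destruct w as [g0 l]; simpl in V.
  pose proof (xin false g0) as Hy. simpl in Hy.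
  set (r := rep P2 g0) in *.
  set (y := gmul g0 (ginv r)) in *.
  destruct (binv_spec y Hy) as [B1 B2].
  assert (Hyr : gmul y r = g0) by (unfold y; gnorm; reflexivity).
  assert (R1 : rep P1 (gmul x (binv y)) = gone) by (apply rep_inP; auto; apply sub_mul; auto).
  assert (Bm : beta (gmul x (binv y)) = gmul (beta x) y) by (rewrite beta_mul, B2; auto).
  unfold act_te at 2; simpl. fold r. fold y.
  destruct l as [|[e' c] l'].
  - unfold act_te, act_h; simpl. rewrite R1, inv_one, mulr1.
    destruct (excluded_middle_informative _) as [D|D].
    + rewrite Bm, mulA', Hyr. reflexivity.
    + exfalso; apply D; auto.
  - destruct (excluded_middle_informative _) as [D|D].
    + destruct D as [D1 D2]. simpl in D2. subst e'.
      destruct V as [V1 [V2 V3]]. simpl in V1.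
      assert (y = g0) by (rewrite <- Hyr, D1, mulr1; reflexivity).
      unfold act_te, act_h; simpl.
      replace (gmul x (gmul (binv y) c)) with (gmul (gmul x (binv y)) c) by (gnorm; reflexivity).
      rewrite rep_left; auto; [| apply sub_mul; auto]. rewrite V1.
      replace (gmul (gmul (gmul x (binv y)) c) (ginv c)) with (gmul x (binv y)) by (gnorm; reflexivity).
      rewrite Bm, H. destruct l' as [|[e'' d] l''].
      * reflexivity.
      * destruct (excluded_middle_informative _) as [D'|D'].
        -- exfalso. destruct D' as [D'1 D'2]. apply (V2 D'2 D'1).
        -- reflexivity.
    + unfold act_te, act_h; simpl. rewrite R1, inv_one, mulr1.
      destruct (excluded_middle_informative _) as [D'|D'].
      * rewrite Bm, mulA', Hyr. reflexivity.
      * exfalso; apply D'; auto.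
Qed.

Definition Xv := {w : T | validL (snd w)}.
Definition XG := PermG Xv.

Definition liftT (e : bool) (w : Xv) : Xv :=
  exist _ (act_te e (proj1_sig w)) (act_valid e _ (proj2_sig w)).
Definition liftH (h : A) (w : Xv) : Xv :=
  exist (fun w => validL (snd w)) (act_h h (proj1_sig w)) (proj2_sig w).

Definition permT : XG.
  refine (mkPerm Xv (liftT true) (liftT false) _ _).
  - intro w. apply sig_ext; simpl. apply (act_inv false). apply proj2_sig.
  - intro w. apply sig_ext; simpl. apply (act_inv true). apply proj2_sig.
Defined.

Definition permH (h : A) : XG.
  refine (mkPerm Xv (liftH h) (liftH (ginv h)) _ _).
  - intro w. apply sig_ext; simpl. unfold act_h; simpl. rewrite mulKr. destruct (proj1_sig w); reflexivity.
  - intro w. apply sig_ext; simpl. unfold act_h; simpl. rewrite mulKl. destruct (proj1_sig w); reflexivity.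
Defined.

Lemma permH_hom : is_hom A XG permH.
Proof.
  intros x y. apply perm_ext; intro w. apply sig_ext. simpl. unfold act_h; simpl. rewrite gmulA. reflexivity.
Qed.

Lemma permT_rel : forall x, P1 x -> gmul permT (gmul (permH x) (ginv permT)) = permH (beta x).
Proof.
  intros x Px. apply perm_ext; intro w. apply sig_ext. simpl. apply act_rel; auto. apply proj2_sig.
Qed.

Fixpoint rawval (g : A) (l : list (bool * A)) (p : T) : T :=
  match l with
  | [] => act_h g p
  | (e, g1) :: r => act_h g (act_te e (rawval g1 r p))
  end.

Lemma raw_inv : forall l e g1, reducedL A P1 P2 ((e, g1) :: l) ->
  exists x r m, act_te e (rawval g1 l (gone, [])) = (x, (e, r) :: m)
    /\ length m = length l /\ PP (negb e) x.
Proof.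
  induction l as [|[e2 g2] l2 IH]; intros e g1 Red.
  - simpl. unfold act_te, act_h; simpl. do 3 eexists; split; [reflexivity|]. split; [reflexivity|].
    apply gam_in, xin.
  - destruct Red as [Rd1 Rd2].
    destruct (IH e2 g2 Rd2) as [x2 [r2 [m [E1 [E2 E3]]]]].
    simpl. rewrite E1. unfold act_te at 1, act_h; simpl.
    destruct (excluded_middle_informative _) as [D|D].
    + exfalso. destruct D as [D1 D2]. apply (Rd1 D2).
      apply rep_one_P in D1; [| apply sgP].
      rewrite D2, Bool.negb_involutive in E3.
      replace g1 with (gmul (gmul g1 x2) (ginv x2)) by (gnorm; reflexivity).
      apply sub_mul; [apply sgP | auto | apply sub_inv; [apply sgP | auto]].
    + simpl. do 3 eexists; split; [reflexivity|]. split; [simpl; rewrite E2; reflexivity|].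
      apply gam_in, xin.
Qed.

Variable K : Group.
Variable i : A -> K.
Variable t : K.
Hypothesis HK : is_HNN A P1 beta K i t.

Theorem britton : forall g l, reducedL A P1 P2 l -> (l <> [] \/ g <> gone) -> val A K i t g l <> gone.
Proof.
  intros g l Red NT E.
  destruct HK as [_ [_ U]].
  destruct (U XG permH permT permH_hom permT_rel) as [phi [phom [phi_i [phi_t _]]]].
  assert (Hv : forall (l0 : list (bool * A)) g w, proj1_sig (pf (phi (val A K i t g l0)) w) = rawval g l0 (proj1_sig w)).
  { clear - phom phi_i phi_t. intro l0. induction l0 as [|[e g1] r IH]; intros g w; simpl.
    - rewrite phi_i. reflexivity.
    - rewrite !phom, phi_i. simpl. f_equal. destruct e; simpl.
      + rewrite phi_t. simpl. f_equal. apply IH.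
      + rewrite (hom_inv _ _ _ phom), phi_t. simpl. f_equal. apply IH. }
  pose (base := exist (fun w : T => validL (snd w)) (gone, []) I).
  specialize (Hv l g base). rewrite E, (hom_one _ _ _ phom) in Hv. simpl in Hv.
  destruct l as [|[e g1] r].
  - simpl in Hv. unfold act_h in Hv; simpl in Hv. rewrite mulr1 in Hv.
    destruct NT as [NT|NT]; [apply NT; reflexivity|]. inversion Hv; auto.
  - simpl in Hv. destruct (raw_inv r e g1 Red) as [x0 [r0 [m [E1 _]]]].
    rewrite E1 in Hv. unfold act_h in Hv. simpl in Hv. discriminate.
Qed.
End Britton.

Definition letter (K : Group) (b : bool) (s : K) : K := if b then s else ginv s.

Lemma eval_app (K : Group) (w1 w2 : list (bool * K)) :
  eval_word K (w1 ++ w2) = gmul (eval_word K w1) (eval_word K w2).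
Proof.
  induction w1 as [|[b s] w IH]; simpl.
  - rewrite gmul1; reflexivity.
  - rewrite IH, gmulA. reflexivity.
Qed.

Definition flip (K : Group) (p : bool * K) : bool * K := (negb (fst p), snd p).

Lemma eval_inv (K : Group) (w : list (bool * K)) :
  eval_word K (rev (map (flip K) w)) = ginv (eval_word K w).
Proof.
  induction w as [|[b s] w IH]; simpl.
  - rewrite inv_one; reflexivity.
  - rewrite eval_app, IH. simpl. rewrite mulr1, inv_mul. destruct b; simpl; rewrite ?inv_inv; reflexivity.
Qed.

Lemma word_over_app (K : Group) S w1 w2 : word_over K S w1 -> word_over K S w2 -> word_over K S (w1 ++ w2).
Proof. unfold word_over; intros H1 H2 p Hp. apply in_app_or in Hp. destruct Hp; auto. Qed.

Lemma word_over_inv (K : Group) S w : word_over K S w -> word_over K S (rev (map (flip K) w)).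
Proof.
  unfold word_over; intros H p Hp. apply in_rev in Hp. apply in_map_iff in Hp.
  destruct Hp as [q [E Hq]]. subst p. simpl. apply H; auto.
Qed.

Lemma eval_hom (A K : Group) (f : A -> K) (hf : is_hom A K f) (w : list (bool * A)) :
  f (eval_word A w) = eval_word K (map (fun p => (fst p, f (snd p))) w).
Proof.
  induction w as [|[b s] w IH]; simpl.
  - apply (hom_one _ _ _ hf).
  - rewrite hf, IH. destruct b; simpl; [|rewrite (hom_inv _ _ _ hf)]; reflexivity.
Qed.

Section SubGroup.
Variable K : Group.
Variable Lp : K -> Prop.
Hypothesis L1 : Lp gone.
Hypothesis Lm : forall x y, Lp x -> Lp y -> Lp (gmul x y).
Hypothesis Li : forall x, Lp x -> Lp (ginv x).
Definition SubG : Group.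
  refine {| gcar := {k : K | Lp k};
            gmul := fun a b => exist _ (gmul (proj1_sig a) (proj1_sig b)) (Lm _ _ (proj2_sig a) (proj2_sig b));
            gone := exist _ gone L1;
            ginv := fun a => exist _ (ginv (proj1_sig a)) (Li _ (proj2_sig a)) |}.
  - intros; apply sig_ext; simpl; apply gmulA.
  - intros; apply sig_ext; simpl; apply gmul1.
  - intros; apply sig_ext; simpl; apply gmulV.
Defined.
End SubGroup.

Section HNNGen.
Variable A : Group.
Variables P1 P2 : A -> Prop.
Variable alpha : A -> A.
Variable K : Group.
Variable i : A -> K.
Variable t : K.
Hypothesis HK : is_HNN A P1 alpha K i t.

Lemma i_hom : is_hom A K i.
Proof. destruct HK; auto. Qed.

Lemma hnn_gen (SA : list A) : generates A SA -> generates K (map i SA ++ [t]).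
Proof.
  intro GA.
  set (Sl := map i SA ++ [t]).
  set (Lp := fun k => exists w, word_over K Sl w /\ eval_word K w = k).
  assert (L1 : Lp gone) by (exists []; split; [intros p Hp; destruct Hp| reflexivity]).
  assert (Lm : forall x y, Lp x -> Lp y -> Lp (gmul x y)).
  { intros x y [w1 [H1 E1]] [w2 [H2 E2]]. exists (w1 ++ w2). split.
    - apply word_over_app; auto.
    - rewrite eval_app, E1, E2; reflexivity. }
  assert (Li : forall x, Lp x -> Lp (ginv x)).
  { intros x [w [H E]]. exists (rev (map (flip K) w)). split.
    - apply word_over_inv; auto.
    - rewrite eval_inv, E; reflexivity. }
  set (SG := SubG K Lp L1 Lm Li).
  assert (Ji : forall h, Lp (i h)).
  { intro h. destruct (GA h) as [w [Hw E]]. subst h.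
    exists (map (fun p => (fst p, i (snd p))) w). split.
    - intros p Hp. apply in_map_iff in Hp. destruct Hp as [q [E Hq]]. subst p. simpl.
      unfold Sl. apply in_or_app. left. apply in_map. apply Hw; auto.
    - rewrite (eval_hom _ _ i i_hom). reflexivity. }
  assert (Jt : Lp t).
  { exists [(true, t)]. split.
    - intros p [Hp|[]]. subst p. simpl. unfold Sl. apply in_or_app. right. left. reflexivity.
    - simpl. apply mulr1. }
  set (j := fun h => (exist _ (i h) (Ji h) : SG)).
  set (s := (exist _ t Jt : SG)).
  destruct HK as [ih [rel U]].
  assert (jh : is_hom A SG j).
  { intros x y. apply sig_ext. simpl. apply ih. }
  assert (jr : forall x, P1 x -> gmul s (gmul (j x) (ginv s)) = j (alpha x)).
  { intros x Px. apply sig_ext. simpl. apply rel; auto. }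
  destruct (U SG j s jh jr) as [phi [phom [phi_i [phi_t _]]]].
  assert (idh : is_hom K K (fun k => k)) by (intros x y; reflexivity).
  destruct (U K i t ih rel) as [phi0 [_ [_ [_ uniq]]]].
  assert (E1 : forall k, k = phi0 k) by (apply (uniq (fun k => k)); auto).
  assert (E2 : forall k, proj1_sig (phi k) = phi0 k).
  { apply (uniq (fun k => proj1_sig (phi k))).
    - intros x y. rewrite phom. reflexivity.
    - intro x. rewrite phi_i. reflexivity.
    - rewrite phi_t. reflexivity. }
  intro k. change (Lp k). rewrite (E1 k), <- (E2 k). apply (proj2_sig (phi k)).
Qed.

Lemma val_left a g l : gmul (i a) (val A K i t g l) = val A K i t (gmul a g) l.
Proof.
  destruct l as [|[e g1] r]; simpl; rewrite i_hom; [reflexivity|]. rewrite gmulA. reflexivity.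
Qed.

Lemma all_val (SA : list A) : generates A SA -> forall k, exists g l, val A K i t g l = k.
Proof.
  intros GA k. destruct (hnn_gen SA GA k) as [w [Hw E]]. subst k.
  induction w as [|[b x] w IH]; simpl.
  - exists gone, []. simpl. apply (hom_one _ _ _ i_hom).
  - destruct IH as [g [l E]].
    { intros p Hp. apply Hw. right; auto. }
    rewrite <- E.
    assert (Hx : In x (map i SA ++ [t])) by (apply (Hw (b, x)); left; reflexivity).
    apply in_app_or in Hx. destruct Hx as [Hx|[Hx|[]]].
    + apply in_map_iff in Hx. destruct Hx as [h [Eh _]]. subst x.
      destruct b.
      * exists (gmul h g), l. symmetry; apply val_left.
      * exists (gmul (ginv h) g), l. rewrite <- (hom_inv _ _ _ i_hom). symmetry; apply val_left.
    + subst x. exists gone, ((b, g) :: l). simpl. rewrite (hom_one _ _ _ i_hom), gmul1.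
      destruct b; reflexivity.
Qed.

Hypothesis hal : sub_iso A P1 P2 alpha.

Lemma pinch e g2 : Pe A P1 P2 e g2 -> exists p, gmul (tpow K t e) (gmul (i g2) (tpow K t (negb e))) = i p.
Proof.
  destruct HK as [ih [rel _]].
  destruct e; simpl; intro H.
  - exists (alpha g2). apply rel; auto.
  - destruct hal as [_ [_ [_ sur]]]. destruct (sur g2 H) as [x [Px Ex]]. subst g2.
    exists x. rewrite <- (rel x Px). gnorm. reflexivity.
Qed.

Lemma reduce : forall l g, exists g' l', reducedL A P1 P2 l' /\ val A K i t g l = val A K i t g' l'.
Proof.
  induction l as [|[e g1] r IH]; intro g.
  - exists g, []. simpl. auto.
  - destruct (IH g1) as [g2 [l2 [R2 E2]]].
    simpl. rewrite E2.
    destruct l2 as [|[e3 g3] l3].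
    + exists g, [(e, g2)]. simpl. auto.
    + destruct (classic (e3 = negb e /\ Pe A P1 P2 e g2)) as [[D1 D2]|D].
      * subst e3. destruct (pinch e g2 D2) as [p Ep].
        exists (gmul (gmul g p) g3), l3. split; [destruct R2; auto|].
        rewrite <- !val_left. simpl.
        rewrite i_hom, <- Ep. gnorm. reflexivity.
      * exists g, ((e, g2) :: (e3, g3) :: l3). split; [|reflexivity].
        simpl. split; [|exact R2]. intros E3 HP. apply D; auto.
Qed.
End HNNGen.

Lemma min_nat (P : nat -> Prop) : (exists n, P n) -> exists n, P n /\ forall m, P m -> n <= m.
Proof.
  intros [n Hn].
  destruct (classic (exists n, P n /\ forall m, P m -> n <= m)) as [H|H]; auto.
  exfalso.
  assert (forall k, forall m, m <= k -> ~ P m).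
  { induction k as [|k IH]; intros m Hm Pm.
    - apply H. exists m. split; auto. intros; lia.
    - destruct (Nat.eq_dec m (S k)) as [E|E].
      + subst m. apply H. exists (S k). split; auto. intros m' Pm'.
        destruct (le_lt_dec (S k) m'); auto. exfalso; apply (IH m'); auto; lia.
      + apply (IH m); auto; lia. }
  apply (H0 n n); auto.
Qed.

Fixpoint words (A : Group) (Sg : list A) (n : nat) : list (list (bool * A)) :=
  match n with
  | 0 => [[]]
  | S n' => [] :: flat_map (fun w => map (fun a => a :: w) (map (fun s => (true, s)) Sg ++ map (fun s => (false, s)) Sg)) (words A Sg n')
  end.

Lemma in_words (A : Group) S : forall n w, word_over A S w -> length w <= n -> In w (words A S n).
Proof.
  induction n as [|n IH]; intros w Hw Hl.
  - destruct w; simpl in *; [auto | lia].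
  - destruct w as [|[b s] w]; simpl; [auto|]. right.
    apply in_flat_map. exists w. split.
    + apply IH; [intros p Hp; apply Hw; right; auto | simpl in Hl; lia].
    + apply (in_map (fun a => a :: w)). assert (In s S) by (apply (Hw (b, s)); left; auto).
      apply in_or_app. destruct b; [left | right]; apply in_map with (f := fun s => (_, s)); auto.
Qed.

Definition Ball (A : Group) (S : list A) (n : nat) : list A := map (eval_word A) (words A S n).

Lemma in_ball (A : Group) S n g : word_len_le A S g n -> In g (Ball A S n).
Proof.
  intros [w [Hw [Hl E]]]. subst g. apply in_map. apply in_words; auto.
Qed.

Section Hyp.
Variable G : Group.
Variable SG : list G.
Hypothesis gen : generates G SG.

Lemma wl_ex g : exists n, word_len_le G SG g n /\ forall m, word_len_le G SG g m -> n <= m.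
Proof.
  apply min_nat. destruct (gen g) as [w [Hw E]]. exists (length w), w. auto.
Qed.

Definition wl (g : G) : nat := proj1_sig (constructive_indefinite_description _ (wl_ex g)).

Lemma wl_spec g : word_len_le G SG g (wl g) /\ forall m, word_len_le G SG g m -> wl g <= m.
Proof. unfold wl. destruct (constructive_indefinite_description _ _); simpl; auto. Qed.

Lemma wl_le g m : word_len_le G SG g m -> wl g <= m.
Proof. apply wl_spec. Qed.

Lemma wl_inv g : wl (ginv g) <= wl g.
Proof.
  apply wl_le. destruct (wl_spec g) as [[w [Hw [Hl E]]] _].
  exists (rev (map (flip G) w)). split; [apply word_over_inv; auto|]. split.
  - rewrite length_rev, length_map; auto.
  - rewrite eval_inv, E; reflexivity.
Qed.

Definition d (x y : G) : nat := wl (gmul (ginv x) y).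

Lemma d_sym x y : d x y = d y x.
Proof.
  unfold d. apply Nat.le_antisymm.
  - rewrite <- (inv_inv G (gmul (ginv x) y)) at 1. rewrite inv_mul, inv_inv. apply wl_inv.
  - rewrite <- (inv_inv G (gmul (ginv y) x)) at 1. rewrite inv_mul, inv_inv. apply wl_inv.
Qed.

Lemma d_dist x y : word_dist G SG x y (d x y).
Proof. apply wl_spec. Qed.

Lemma d_left f x y : d (gmul f x) (gmul f y) = d x y.
Proof. unfold d. f_equal. gnorm. reflexivity. Qed.

Lemma midpoint x y : exists m, d x m <= d x y - d x y / 2 /\ d m y <= d x y - d x y / 2.
Proof.
  set (D := d x y).
  destruct (wl_spec (gmul (ginv x) y)) as [[w [Hw [Hl E]]] _].
  fold (d x y) in Hl. fold D in Hl.
  exists (gmul x (eval_word G (firstn (D / 2) w))).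
  assert (Ew : eval_word G w = gmul (eval_word G (firstn (D/2) w)) (eval_word G (skipn (D/2) w))).
  { rewrite <- eval_app, firstn_skipn. reflexivity. }
  split.
  - unfold d at 1. rewrite mulKl. apply wl_le. exists (firstn (D/2) w). split.
    + intros p Hp. apply Hw. rewrite <- (firstn_skipn (D/2) w). apply in_or_app; auto.
    + split; [pose proof (firstn_le_length (D/2) w); pose proof (Nat.Div0.mul_div_le D 2); lia | reflexivity].
  - unfold d at 1. apply wl_le. exists (skipn (D/2) w). split.
    + intros p Hp. apply Hw. rewrite <- (firstn_skipn (D/2) w). apply in_or_app; auto.
    + split; [rewrite length_skipn; lia|]. rewrite inv_mul. gnorm. rewrite <- E, Ew. gnorm. reflexivity.
Qed.

Variable delta : nat.
Hypothesis HYP : forall (x y z w : G) (dxy dzw dxz dyw dxw dyz : nat),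
      word_dist G SG x y dxy -> word_dist G SG z w dzw ->
      word_dist G SG x z dxz -> word_dist G SG y w dyw ->
      word_dist G SG x w dxw -> word_dist G SG y z dyz ->
      dxy + dzw <= Nat.max (dxz + dyw) (dxw + dyz) + 2 * delta.

Lemma four x y z w : d x y + d z w <= Nat.max (d x z + d y w) (d x w + d y z) + 2 * delta.
Proof. apply (HYP x y z w); apply d_dist. Qed.

Lemma list_bound (l : list G) : exists r, forall a, In a l -> wl a <= r.
Proof.
  induction l as [|a l [r IH]].
  - exists 0; intros a [].
  - exists (Nat.max (wl a) r). intros b [E|Hb]; [subst; lia|]. specialize (IH b Hb); lia.
Qed.

Lemma conj_ball (P : G -> Prop) (lP : list G) : is_subgroup G P -> (forall x, P x -> In x lP) ->
  exists q, forall z, P z -> In (gmul (ginv q) (gmul z q)) (Ball G SG (4 * delta + 1)).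
Proof.
  intros sg HlP.
  destruct (min_nat (fun r => exists q, forall a, P a -> d q a <= r)) as [r0 [[q Hq] Hmin]].
  { destruct (list_bound lP) as [r Hr]. exists r, gone. intros a Pa. unfold d.
    rewrite inv_one, gmul1. apply Hr; auto. }
  exists q. intros f Pf.
  apply in_ball.
  assert (Hfq : forall a, P a -> d (gmul f q) a <= r0).
  { intros a Pa. rewrite <- (d_left (ginv f)). rewrite mulKl. apply Hq.
    apply sub_mul; auto. apply sub_inv; auto. }
  set (D := d q (gmul f q)).
  destruct (midpoint q (gmul f q)) as [m [Hm1 Hm2]]. fold D in Hm1, Hm2.
  assert (Hma : forall a, P a -> d m a + D / 2 <= r0 + 2 * delta).
  { intros a Pa. pose proof (four a m q (gmul f q)) as F4. fold D in F4.
    rewrite (d_sym a q) in F4. rewrite (d_sym m q) in F4.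
    pose proof (Hq a Pa). pose proof (Hfq a Pa). rewrite (d_sym a m) in F4.
    pose proof (Nat.Div0.mul_div_le D 2). rewrite (d_sym a (gmul f q)) in F4. lia. }
  assert (D / 2 <= 2 * delta).
  { destruct (le_lt_dec (D / 2) (2 * delta)) as [L|L]; auto. exfalso.
    assert (r0 <= r0 + 2 * delta - D / 2).
    { apply Hmin. exists m. intros a Pa. specialize (Hma a Pa). lia. }
    pose proof (Hma gone (sub_one G P sg)). lia. }
  assert (wl (gmul (ginv q) (gmul f q)) <= 4 * delta + 1).
  { change (D <= 4 * delta + 1). pose proof (Nat.Div0.mul_div_le D 2).
    pose proof (Nat.mod_upper_bound D 2). pose proof (Nat.div_mod_eq D 2). lia. }
  destruct (wl_spec (gmul (ginv q) (gmul f q))) as [[w [Hw [Hl E]]] _].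
  exists w. split; auto. split; auto. lia.
Qed.
End Hyp.

Fixpoint sublists {X : Type} (B : list X) : list (list X) :=
  match B with
  | [] => [[]]
  | a :: B' => map (cons a) (sublists B') ++ sublists B'
  end.

Lemma sublists_spec {X : Type} (B : list X) (Q : X -> Prop) :
  exists l, In l (sublists B) /\ forall x, In x l <-> In x B /\ Q x.
Proof.
  induction B as [|a B [l [Hl E]]].
  - exists []. simpl. split; [auto|]. intro x; split; [intros []|intros [[] _]].
  - destruct (classic (Q a)) as [Qa|Qa].
    + exists (a :: l). split.
      * simpl. apply in_or_app. left. apply in_map; auto.
      * intro x. simpl. rewrite E. split.
        -- intros [H|H]; [subst; auto|tauto].
        -- intros [[H|H] Qx]; auto.
    + exists l. split.
      * simpl. apply in_or_app. right; auto.
      * intro x. simpl. rewrite E. split.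
        -- tauto.
        -- intros [[H|H] Qx]; [subst; tauto|auto].
Qed.

Lemma pigeon {Y : Type} (C : list Y) : forall (R : nat -> Y -> Prop) N0,
  (forall n, N0 <= n -> exists c, In c C /\ R n c) ->
  exists c, In c C /\ forall N, exists n, N <= n /\ R n c.
Proof.
  induction C as [|c C IH]; intros R N0 H.
  - destruct (H N0 (le_n _)) as [c [[] _]].
  - destruct (classic (forall N, exists n, N <= n /\ R n c)) as [A|A].
    + exists c. split; [left; auto|auto].
    + apply not_all_ex_not in A. destruct A as [N1 A].
      destruct (IH R (Nat.max N0 N1)) as [c' [Hc' Hr]].
      * intros n Hn. destruct (H n ltac:(lia)) as [c0 [[E|Hc0] Rc]].
        -- subst c0. exfalso. apply A. exists n. split; [lia|auto].
        -- exists c0; auto.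
      * exists c'. split; [right; auto|auto].
Qed.

Definition kap (A : Group) (q z : A) : A := gmul (ginv q) (gmul z q).

Lemma kap_inj (A : Group) q a b : kap A q a = kap A q b -> a = b.
Proof.
  unfold kap; intro E. apply mul_cancel_l in E. apply mul_cancel_r in E. exact E.
Qed.

Section Conv.
Variables A B : Group.
Variable k : A -> B.
Variable u : B.

Fixpoint conv (b : B) (l : list (bool * A)) : B * list (bool * B) :=
  match l with
  | [] => (b, [])
  | (e, g1) :: r =>
      if e then (gmul b u, (true, fst (conv (k g1) r)) :: snd (conv (k g1) r))
      else (b, (false, fst (conv (gmul (ginv u) (k g1)) r)) :: snd (conv (gmul (ginv u) (k g1)) r))
  end.

Lemma conv_len : forall l b, length (snd (conv b l)) = length l.
Proof.
  induction l as [|[e g1] r IH]; intro b; simpl; auto. destruct e; simpl; rewrite IH; auto.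
Qed.

Variables F1 F2 : A -> Prop.
Variables F1' F2' : B -> Prop.
Variable R : A -> Prop.
Hypothesis h1 : forall g, R g -> F1' (k g) -> F1 g.
Hypothesis h2 : forall g, R g -> F2' (gmul (gmul (ginv u) (k g)) u) -> F2 g.

Lemma conv_red : forall l b, reducedL A F1 F2 l -> (forall p, In p l -> R (snd p)) ->
  reducedL B F1' F2' (snd (conv b l)).
Proof.
  induction l as [|[e g1] r IH]; intros b Red HR; simpl; auto.
  destruct Red as [Rd1 Rd2].
  assert (HR' : forall p, In p r -> R (snd p)) by (intros; apply HR; right; auto).
  assert (Rg1 : R g1) by (apply (HR (e, g1)); left; auto).
  destruct e; simpl; (split; [| apply IH; auto]).
  - destruct r as [|[e2 g2] r2]; simpl; auto.
    destruct e2; simpl; [discriminate|]. intros _ HF. apply (Rd1 eq_refl). simpl. apply h1; auto.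
  - destruct r as [|[e2 g2] r2]; simpl; auto.
    destruct e2; simpl; [|discriminate]. intros _ HF. apply (Rd1 eq_refl). simpl. apply h2; auto.
Qed.
End Conv.

Section ConvVal.
Variables H G K K' : Group.
Variable k : H -> G.
Variable u : G.
Variable i : H -> K. Variable t : K.
Variable i' : G -> K'. Variable t' : K'.
Variable phi : K -> K'.
Hypothesis ih' : is_hom G K' i'.
Hypothesis phom : is_hom K K' phi.
Hypothesis phi_i : forall x, phi (i x) = i' (k x).
Hypothesis phi_t : phi t = gmul (i' u) t'.

Lemma conv_val : forall l b a g, b = gmul a (k g) ->
  val G K' i' t' (fst (conv H G k u b l)) (snd (conv H G k u b l)) = gmul (i' a) (phi (val H K i t g l)).
Proof.
  induction l as [|[e g1] r IH]; intros b a g Eb; subst b; simpl.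
  - rewrite phi_i, ih'. reflexivity.
  - destruct e; simpl.
    + rewrite (IH (k g1) gone g1) by (rewrite gmul1; reflexivity).
      rewrite !phom, phi_i, phi_t, !ih', (hom_one _ _ _ ih'). gnorm. reflexivity.
    + rewrite (IH (gmul (ginv u) (k g1)) (ginv u) g1) by reflexivity.
      rewrite !phom, phi_i, (hom_inv _ _ _ phom), phi_t, !ih', (hom_inv _ _ _ ih'). gnorm. reflexivity.
Qed.
End ConvVal.

Lemma bound_list (A : Group) (SA : list A) (gen : generates A SA) (l : list A) :
  exists N, forall h, In h l -> forall n, N <= n -> In h (Ball A SA n).
Proof.
  induction l as [|a l [N HN]].
  - exists 0; intros ? [].
  - destruct (gen a) as [w [Hw E]].
    exists (Nat.max N (length w)). intros h [E'|Hh] n Hn.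
    + subst. apply in_ball. exists w. repeat split; auto. lia.
    + apply HN; auto. lia.
Qed.

Lemma collect (A K : Group) (P1 P2 : A -> Prop) alpha i t (HK : is_HNN A P1 alpha K i t)
  (hal : sub_iso A P1 P2 alpha) SA (gen : generates A SA) :
  forall Q : list K, exists Tl : list A, forall k, In k Q -> exists g l,
    reducedL A P1 P2 l /\ val A K i t g l = k /\ In g Tl /\ forall p, In p l -> In (snd p) Tl.
Proof.
  induction Q as [|k Q [Tl HT]].
  - exists []. intros k [].
  - destruct (all_val A P1 alpha K i t HK SA gen k) as [g0 [l0 E0]].
    destruct (reduce A P1 P2 alpha K i t HK hal l0 g0) as [g [l [Red E]]].
    exists (g :: map snd l ++ Tl). intros k' [Ek|Hk].
    + subst k'. exists g, l. split; auto. split; [rewrite <- E; auto|]. split; [left; auto|].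
      intros p Hp. right. apply in_or_app. left. apply in_map; auto.
    + destruct (HT k' Hk) as [g' [l' [R' [E' [Hg' Hl']]]]].
      exists g', l'. repeat split; auto.
      * right. apply in_or_app. right; auto.
      * intros p Hp. right. apply in_or_app. right; auto.
Qed.

Lemma sub_ext (A : Group) (P Q : A -> Prop) : (forall x, P x <-> Q x) -> is_subgroup A P -> is_subgroup A Q.
Proof.
  intros E [h1 [h2 h3]]. split; [|split].
  - apply E; auto.
  - intros x y Hx Hy. apply E. apply h2; apply E; auto.
  - intros x Hx. apply E. apply h3; apply E; auto.
Qed.

Lemma kap_hom (A : Group) q : is_hom A A (kap A q).
Proof. intros x y. unfold kap. gnorm. reflexivity. Qed.

Lemma comp_hom (A B C : Group) (f : A -> B) (g : B -> C) : is_hom A B f -> is_hom B C g -> is_hom A C (fun x => g (f x)).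
Proof. intros hf hg x y. rewrite hf, hg. reflexivity. Qed.

Lemma img_sub (A B : Group) (f : A -> B) (hf : is_hom A B f) (P : A -> Prop) :
  is_subgroup A P -> is_subgroup B (fun z => exists y, P y /\ z = f y).
Proof.
  intros [h1 [h2 h3]]. split; [|split].
  - exists gone. split; auto. symmetry; apply (hom_one _ _ _ hf).
  - intros x y [a [Pa Ea]] [b [Pb Eb]]. exists (gmul a b). split; auto. subst. rewrite hf; auto.
  - intros x [a [Pa Ea]]. exists (ginv a). split; auto. subst. rewrite (hom_inv _ _ _ hf); auto.
Qed.

Lemma img_fin (A B : Group) (f : A -> B) (P : A -> Prop) lP : (forall x, P x -> In x lP) ->
  forall z, (exists y, P y /\ z = f y) -> In z (map f lP).
Proof. intros HP z [y [Py E]]. subst. apply in_map; auto. Qed.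

Theorem lemma4p1 :
  forall (G : Group), hyperbolic_group G ->
  forall (H : Group), limit_group G H ->
  forall (F1 F2 : H -> Prop) (alpha : H -> H),
    finite_subgroup H F1 -> finite_subgroup H F2 -> sub_iso H F1 F2 alpha ->
    exists (F1' F2' : G -> Prop) (beta : G -> G),
      finite_subgroup G F1' /\ finite_subgroup G F2' /\ sub_iso G F1' F2' beta /\
      forall (K : Group) (i : H -> K) (t : K), is_HNN H F1 alpha K i t ->
      forall (K' : Group) (i' : G -> K') (t' : K'), is_HNN G F1' beta K' i' t' ->
        limit_group K' K.
Proof.
  intros G HG H [[SH genH] FR] F1 F2 alpha [sgF1 [lF1 HlF1]] [sgF2 [lF2 HlF2]] hal.
  destruct HG as [SG [genG [delta HYP]]].
  set (B := Ball G SG (4 * delta + 1)).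
  set (Ln := fun n => gone :: Ball H SH n ++ lF1 ++ lF2).
  assert (Fex : forall n, exists f, is_hom H G f /\ forall x y, In x (Ln n) -> In y (Ln n) -> f x = f y -> x = y)
    by (intro n; apply FR).
  set (f := fun n => proj1_sig (constructive_indefinite_description _ (Fex n))).
  assert (fspec : forall n, is_hom H G (f n) /\ forall x y, In x (Ln n) -> In y (Ln n) -> f n x = f n y -> x = y).
  { intro n. unfold f. destruct (constructive_indefinite_description _ _). auto. }
  assert (inL1 : forall n x, F1 x -> In x (Ln n)).
  { intros n x Hx. right. apply in_or_app. right. apply in_or_app. left. auto. }
  assert (inL2 : forall n x, F2 x -> In x (Ln n)).
  { intros n x Hx. right. apply in_or_app. right. apply in_or_app. right. auto. }
  set (Codes := list_prod (list_prod (sublists B) (sublists B)) (sublists (list_prod B B))).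
  set (SpecQ := fun n (c : (list G * list G) * list (G * G)) q1 q2 =>
      (forall x, In x (fst (fst c)) <-> exists y, F1 y /\ x = kap G q1 (f n y)) /\
      (forall x, In x (snd (fst c)) <-> exists y, F2 y /\ x = kap G q2 (f n y)) /\
      (forall p, In p (snd c) <-> exists y, F1 y /\ p = (kap G q1 (f n y), kap G q2 (f n (alpha y))))).
  set (Spec := fun n c => exists q1 q2, SpecQ n c q1 q2).
  assert (SpecEx : forall n, 0 <= n -> exists c, In c Codes /\ Spec n c).
  { intros n _. destruct (fspec n) as [fh _].
    destruct (conj_ball G SG genG delta HYP _ _ (img_sub H G (f n) fh F1 sgF1) (img_fin H G (f n) F1 lF1 HlF1)) as [q1 Hq1].
    destruct (conj_ball G SG genG delta HYP _ _ (img_sub H G (f n) fh F2 sgF2) (img_fin H G (f n) F2 lF2 HlF2)) as [q2 Hq2].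
    destruct (sublists_spec B (fun x => exists y, F1 y /\ x = kap G q1 (f n y))) as [l1 [Hl1 E1]].
    destruct (sublists_spec B (fun x => exists y, F2 y /\ x = kap G q2 (f n y))) as [l2 [Hl2 E2]].
    destruct (sublists_spec (list_prod B B) (fun p => exists y, F1 y /\ p = (kap G q1 (f n y), kap G q2 (f n (alpha y))))) as [lg [Hlg Eg]].
    exists ((l1, l2), lg). split.
    { unfold Codes. apply in_prod; [apply in_prod|]; auto. }
    exists q1, q2. unfold SpecQ; simpl. split; [|split].
    - intro x. rewrite E1. split; [tauto|]. intros [y [Fy E]]. split; [|exists y; auto].
      subst x. apply Hq1. exists y; auto.
    - intro x. rewrite E2. split; [tauto|]. intros [y [Fy E]]. split; [|exists y; auto].
      subst x. apply Hq2. exists y; auto.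
    - intro p. rewrite Eg. split; [tauto|]. intros [y [Fy E]]. split; [|exists y; auto].
      subst p. apply in_prod.
      + apply Hq1. exists y; auto.
      + apply Hq2. exists (alpha y). split; auto. apply hal; auto. }
  destruct (pigeon Codes Spec 0 SpecEx) as [[[l1 l2] lg] [_ Inf]].
  set (F1' := fun x => In x l1).
  set (F2' := fun x => In x l2).
  set (beta := fun x => epsilon (inhabits gone) (fun y => In (x, y) lg)).
  assert (key : forall n q1 q2, SpecQ n ((l1, l2), lg) q1 q2 -> forall x, F1 x ->
            beta (kap G q1 (f n x)) = kap G q2 (f n (alpha x))).
  { intros n q1 q2 [S1 [S2 S3]] x Fx. simpl in S1, S2, S3.
    assert (ex : exists y, In (kap G q1 (f n x), y) lg).
    { exists (kap G q2 (f n (alpha x))). apply S3. exists x; auto. }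
    pose proof (epsilon_spec (inhabits gone) _ ex) as Hb. fold (beta (kap G q1 (f n x))) in Hb.
    apply S3 in Hb. destruct Hb as [y [Fy Ey]]. injection Ey as Ey1 Ey2.
    apply kap_inj in Ey1. apply (proj2 (fspec n)) in Ey1; auto. subst y. exact Ey2. }
  destruct (Inf 0) as [n0 [_ [q1 [q2 SQ]]]].
  destruct (fspec n0) as [fh0 finj0].
  destruct SQ as [S1 [S2 S3]]. simpl in S1, S2, S3.
  assert (sgF1' : is_subgroup G F1').
  { apply (sub_ext G (fun z => exists y, F1 y /\ z = kap G q1 (f n0 y))).
    - intro x; unfold F1'; rewrite S1; tauto.
    - apply (img_sub H G (fun y => kap G q1 (f n0 y))); auto. apply comp_hom; auto. apply kap_hom. }
  assert (sgF2' : is_subgroup G F2').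
  { apply (sub_ext G (fun z => exists y, F2 y /\ z = kap G q2 (f n0 y))).
    - intro x; unfold F2'; rewrite S2; tauto.
    - apply (img_sub H G (fun y => kap G q2 (f n0 y))); auto. apply comp_hom; auto. apply kap_hom. }
  assert (kh1 : is_hom H G (fun y => kap G q1 (f n0 y))) by (apply comp_hom; auto; apply kap_hom).
  assert (kh2 : is_hom H G (fun y => kap G q2 (f n0 y))) by (apply comp_hom; auto; apply kap_hom).
  assert (hbeta : sub_iso G F1' F2' beta).
  { destruct hal as [a1 [a2 [a3 a4]]].
    split; [|split; [|split]].
    - intros x Hx. apply S1 in Hx. destruct Hx as [y [Fy E]]. subst x.
      rewrite (key n0 q1 q2) by (auto; split; auto). apply S2. exists (alpha y). auto.
    - intros x1 x2 Hx1 Hx2. apply S1 in Hx1. apply S1 in Hx2.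
      destruct Hx1 as [y1 [Fy1 E1]], Hx2 as [y2 [Fy2 E2]]. subst x1 x2.
      rewrite <- kh1. rewrite !(key n0 q1 q2) by (auto; try split; auto; apply sgF1; auto).
      rewrite a2 by auto. rewrite kh2. reflexivity.
    - intros x1 x2 Hx1 Hx2 Eb. apply S1 in Hx1. apply S1 in Hx2.
      destruct Hx1 as [y1 [Fy1 E1]], Hx2 as [y2 [Fy2 E2]]. subst x1 x2.
      rewrite !(key n0 q1 q2) in Eb by (auto; split; auto).
      apply kap_inj in Eb. apply finj0 in Eb; auto. apply a3 in Eb; auto. subst; reflexivity.
    - intros z Hz. apply S2 in Hz. destruct Hz as [w [Fw E]]. subst z.
      destruct (a4 w Fw) as [y [Fy Ey]]. subst w.
      exists (kap G q1 (f n0 y)). split.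
      + apply S1. exists y; auto.
      + apply (key n0 q1 q2); auto. split; auto. }
  exists F1', F2', beta. split; [|split; [|split]].
  - split; auto. exists l1. auto.
  - split; auto. exists l2. auto.
  - exact hbeta.
  - intros K i t HK K' i' t' HK'.
    split.
    { exists (map i SH ++ [t]). apply (hnn_gen H F1 alpha K i t HK SH genH). }
    intro SK.
    set (Q := map (fun p => gmul (ginv (fst p)) (snd p)) (list_prod SK SK)).
    destruct (collect H K F1 F2 alpha i t HK hal SH genH Q) as [Tl HTl].
    destruct (bound_list H SH genH Tl) as [N HN].
    destruct (Inf N) as [n [Hn [p1 [p2 SQ]]]].
    pose proof (key n p1 p2 SQ) as keyn.
    destruct SQ as [T1 [T2 T3]]. simpl in T1, T2, T3.
    destruct (fspec n) as [fh finj].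
    set (kk := fun h => kap G p1 (f n h)).
    assert (kkh : is_hom H G kk) by (apply (comp_hom H G G (f n) (kap G p1)); auto; apply kap_hom).
    set (u := gmul (ginv p1) p2).
    destruct HK' as [ih' [rel' U']].
    set (j := fun h => i' (kk h)).
    assert (jh : is_hom H K' j) by (apply (comp_hom H G K' kk i'); auto).
    set (s := gmul (i' u) t').
    assert (jr : forall x, F1 x -> gmul s (gmul (j x) (ginv s)) = j (alpha x)).
    { intros x Fx. unfold s, j.
      transitivity (gmul (i' u) (gmul (gmul t' (gmul (i' (kk x)) (ginv t'))) (ginv (i' u)))).
      { gnorm. reflexivity. }
      rewrite rel' by (apply T1; exists x; auto).
      unfold kk. rewrite keyn by auto.
      rewrite <- (hom_inv _ _ _ ih'), <- !ih'. f_equal. unfold u, kap. gnorm. reflexivity. }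
    destruct HK as [ihK [relK U]].
    destruct (U K' j s jh jr) as [phi [phom [phi_i [phi_t _]]]].
    exists phi. split; auto.
    intros x y Hx Hy E. apply NNPP; intro Nxy.
    assert (Hk : In (gmul (ginv x) y) Q).
    { unfold Q. apply (in_map (fun p => gmul (ginv (fst p)) (snd p)) _ (x, y)). apply in_prod; auto. }
    destruct (HTl _ Hk) as [g [l [Red [Ev [Hg Hl]]]]].
    assert (phik : phi (gmul (ginv x) y) = gone).
    { rewrite phom, (hom_inv _ _ _ phom), E, gmulV. reflexivity. }
    rewrite <- Ev in phik.
    pose proof (conv_val H G K K' kk u i t i' t' phi ih' phom phi_i phi_t l (kk g) gone g (eq_sym (gmul1 G (kk g)))) as CV.
    rewrite phik, (hom_one _ _ _ ih'), mulr1 in CV.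
    assert (HnL : forall h, In h Tl -> In h (Ln n)).
    { intros h Hh. right. apply in_or_app. left. apply (HN h Hh n Hn). }
    revert CV. apply (britton G F1' F2' beta sgF1' sgF2' hbeta K' i' t' (conj ih' (conj rel' U'))).
    + apply (conv_red H G kk u F1 F2 F1' F2' (fun h => In h Tl)); auto.
      * intros h Hh HF. apply T1 in HF. destruct HF as [w [Fw Ew]]. unfold kk in Ew.
        apply kap_inj in Ew. apply finj in Ew; auto. subst; auto.
      * intros h Hh HF.
        assert (Eq : gmul (gmul (ginv u) (kk h)) u = kap G p2 (f n h)) by (unfold u, kk, kap; gnorm; reflexivity).
        rewrite Eq in HF. apply T2 in HF. destruct HF as [w [Fw Ew]].
        apply kap_inj in Ew. apply finj in Ew; auto. subst; auto.
    + destruct l as [|p l'].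
      * right. simpl. intro Eg. apply Nxy.
        assert (g = gone).
        { apply finj; auto; [left; reflexivity|]. rewrite (hom_one _ _ _ fh).
          unfold kk in Eg. apply (kap_inj G p1). rewrite Eg. unfold kap. rewrite gmul1, gmulV. reflexivity. }
        subst g. simpl in Ev. rewrite (hom_one _ _ _ ihK) in Ev. apply eq_one_of. auto.
      * left. intro Eg. pose proof (conv_len H G kk u (p :: l') (kk g)) as CL. rewrite Eg in CL. discriminate.
Qed.
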